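(* For all parameter values $\alpha_L,\alpha_R,\mu_L,\mu_R,\gamma_{RL},\gamma_{LR}>0$ (no symmetry assumed), the system \[ \dot L=\alpha_L L C-\mu_L L+\gamma_{RL} R C,\qquad \dot R=\alpha_R R C-\mu_R R+\gamma_{LR} L C,\qquad C=1-L-R, \] has no closed (periodic) orbits in the interior of the simplex $\Sigma=\{(L,R): L\ge0,\ R\ge0,\ L+R\le1\}$. *)

(* Defs.v *)
From Stdlib Require Import Reals.
From Coquelicot Require Import Coquelicot.
Open Scope R_scope.

Definition Cfree (l r : R) : R := 1 - l - r.

Definition fL (aL muL gRL : R) (l r : R) : R :=
  aL * l * Cfree l r - muL * l + gRL * r * Cfree l r.
Definition fR (aR muR gLR : R) (l r : R) : R :=
  aR * r * Cfree l r - muR * r + gLR * l * Cfree l r.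

Definition in_simplex_interior (l r : R) : Prop :=
  0 < l /\ 0 < r /\ l + r < 1.

(* Main.v *)
Require Import Defs.
From Stdlib Require Import Reals Lra.
From Coquelicot Require Import Coquelicot.
Open Scope R_scope.

Lemma der_eq (f : R -> R) x l l' : is_derive f x l -> l = l' -> is_derive f x l'.
Proof. intros H ->; exact H. Qed.

Lemma der_cont (f : R -> R) x l : is_derive f x l -> continuity_pt f x.
Proof. intros H. apply is_derive_Reals in H.
  apply derivable_continuous_pt. exists l. exact H. Qed.

Lemma nonincr (V dV : R -> R) : (forall t, is_derive V t (dV t)) -> (forall t, dV t <= 0) ->
  forall a b, a <= b -> V b <= V a.
Proof.
intros hd hn a b hab.
destruct (MVT_gen V a b dV) as [c [_ hc]].
- intros x _; apply hd.
- intros x _; eapply der_cont; apply hd.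
- pose proof (hn c). nra.
Qed.

Lemma periodic_zero (V dV : R -> R) T : 0 < T -> (forall t, is_derive V t (dV t)) ->
  (forall t, dV t <= 0) -> (forall t, V (t + T) = V t) -> forall t, dV t = 0.
Proof.
intros hT hd hn hp t0.
assert (Hloc : locally t0 (fun x => V t0 = V x)).
{ exists (mkposreal T hT). intros y hy.
  change (Rabs (y - t0) < T) in hy.
  apply Rabs_lt_between' in hy.
  pose proof (nonincr V dV hd hn) as M.
  destruct (Rle_dec y t0) as [h|h].
  - pose proof (M y t0 h). pose proof (M (t0 - T) y ltac:(lra)).
    pose proof (hp (t0 - T)) as e. replace (t0 - T + T) with t0 in e by ring. lra.
  - pose proof (M t0 y ltac:(lra)). pose proof (M y (t0 + T) ltac:(lra)).
    pose proof (hp t0). lra. }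
pose proof (is_derive_const (K:=R_AbsRing) (V t0) t0) as H0.
pose proof (is_derive_ext_loc _ _ _ _ Hloc H0) as H1.
rewrite <- (is_derive_unique _ _ _ (hd t0)). rewrite (is_derive_unique _ _ _ H1). reflexivity.
Qed.

Lemma zero_const (f : R -> R) : (forall t, is_derive f t 0) -> forall t, f t = f 0.
Proof. intros hd t. destruct (MVT_gen f 0 t (fun _ => 0)) as [c [_ hc]].
- intros x _; apply hd.
- intros x _; eapply der_cont; apply hd.
- lra.
Qed.

Lemma per_nat (f : R -> R) T : (forall t, f (t + T) = f t) -> forall n t, f (t + INR n * T) = f t.
Proof. intros hp n; induction n; intros t.
- simpl. rewrite Rmult_0_l, Rplus_0_r. reflexivity.
- rewrite S_INR. replace (t + (INR n + 1) * T) with ((t + INR n * T) + T) by ring.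
  rewrite hp. apply IHn. Qed.

Lemma per_window (f : R -> R) T : 0 < T -> (forall t, f (t + T) = f t) ->
  forall n t, 0 <= t <= INR n * T -> exists t', 0 <= t' <= T /\ f t = f t'.
Proof. intros hT hp n; induction n; intros t ht.
- simpl in ht. exists 0. split. lra. f_equal. lra.
- destruct (Rle_dec t T). { exists t; split; [lra| reflexivity]. }
  rewrite S_INR, Rmult_plus_distr_r, Rmult_1_l in ht.
  destruct (IHn (t - T)) as [t' [h1 h2]]. lra.
  exists t'. split; auto. rewrite <- h2. replace t with ((t - T) + T) at 1 by ring. apply hp.
Qed.

Lemma per_reduce (f : R -> R) T : 0 < T -> (forall t, f (t+T) = f t) ->
  forall t, exists t', 0 <= t' <= T /\ f t = f t'.
Proof. intros hT hp t. destruct (INR_unbounded (Rabs t / T)) as [n hn].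
  apply (Rmult_lt_compat_r T) in hn; [|lra].
  replace (Rabs t / T * T) with (Rabs t) in hn by (field; lra).
  pose proof (Rle_abs t). pose proof (Rle_abs (-t)). rewrite Rabs_Ropp in *.
  destruct (per_window f T hT hp (n + n) (t + INR n * T)) as [t' [h1 h2]].
  { rewrite plus_INR. lra. }
  exists t'. split; auto. rewrite <- h2. symmetry. apply per_nat. exact hp.
Qed.

Lemma per_min (f : R -> R) T : 0 < T -> (forall t, f (t+T) = f t) ->
  (forall t, continuity_pt f t) -> exists tm, forall t, f tm <= f t.
Proof. intros hT hp hc. destruct (continuity_ab_min f 0 T) as [mx [h1 h2]]; [lra| auto|].
  exists mx. intros t. destruct (per_reduce f T hT hp t) as [t' [h3 h4]]. rewrite h4. apply h1. auto.
Qed.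

Lemma min_deriv (f : R -> R) c l : is_derive f c l -> (forall x, f c <= f x) -> l = 0.
Proof. intros hd hm.
  pose (pr := exist (fun l => derivable_pt_lim f c l) l (proj1 (is_derive_Reals f c l) hd) : derivable_pt f c).
  pose proof (deriv_minimum f (c-1) (c+1) c pr ltac:(lra) ltac:(lra) (fun x _ _ => hm x)) as H.
  exact H.
Qed.

Lemma ln_le_sub1 z : 0 < z -> ln z <= z - 1.
Proof. intros hz. pose proof (exp_ineq1_le (ln z)) as H. rewrite exp_ln in H; lra. Qed.

Lemma ln_key X Y : 0 < X <= 1 -> 0 < Y <= 1 -> (Y - X) * (ln X - ln Y) + (Y - X)^2 <= 0.
Proof. intros hX hY. destruct (Rle_dec X Y).
- assert (ln X - ln Y <= X - Y).
  { rewrite <- ln_div by lra. pose proof (ln_le_sub1 (X / Y) ltac:(apply Rdiv_lt_0_compat; lra)).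
    assert (X / Y * Y = X) by (field; lra). nra. }
  nra.
- assert (ln Y - ln X <= Y - X).
  { rewrite <- ln_div by lra. pose proof (ln_le_sub1 (Y / X) ltac:(apply Rdiv_lt_0_compat; lra)).
    assert (Y / X * X = Y) by (field; lra). nra. }
  nra.
Qed.

Lemma Rmax_lip u x m : Rabs (Rmax u m - Rmax x m) <= Rabs (u - x).
Proof. unfold Rmax; destruct (Rle_dec u m); destruct (Rle_dec x m); unfold Rabs;
  repeat destruct Rcase_abs; lra. Qed.

Lemma Rmax_cont m x : continuous (fun y => Rmax y m) x.
Proof. apply (proj1 (continuity_pt_filterlim _ _)). apply continuity_pt_locally.
  intros eps. exists eps. intros u hu. change (Rabs (u - x) < eps) in hu.
  eapply Rle_lt_trans; [apply Rmax_lip|exact hu]. Qed.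
Definition kf (a gLR gRL x : R) := a + gLR / x - gRL * x.
Definition ksf (gLR gRL x : R) := - gLR / (x*x) - gRL.
Definition Psi (A B muL muR c x : R) := (c * (A + B * x) - muL - muR * x) / (1 + x).
Definition mf (gLR gRL A B muL muR c x : R) := x * ksf gLR gRL x * (c + ln (1 - c)) + Psi A B muL muR c x.
Definition g0 (a gLR gRL A B muL muR d x : R) := - mf gLR gRL A B muL muR (- d / kf a gLR gRL x) x / x.

Lemma g0_cont a gLR gRL A B muL muR d y : 0 < y -> 0 < d -> kf a gLR gRL y < - d ->
  continuous (g0 a gLR gRL A B muL muR d) y.
Proof.
intros hy hd hk.
apply (@ex_derive_continuous R_AbsRing R_NormedModule).
unfold g0, mf, ksf, Psi, kf in *.
assert (hK : a + gLR * / y + - (gRL * y) < - d) by (unfold Rdiv in hk; lra).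
assert (h1 : 0 < 1 + - (- d * / (a + gLR * / y + - (gRL * y)))).
{ set (K := a + gLR * / y + - (gRL * y)) in *.
  replace (1 + - (- d * / K)) with ((K + d) / K) by (field; lra).
  apply Rdiv_neg_neg; lra. }
auto_derive. repeat split; try lra; try (apply Rgt_not_eq; nra).
Qed.

Lemma kf_der a gLR gRL x : 0 < x -> is_derive (kf a gLR gRL) x (ksf gLR gRL x).
Proof. intros hx. unfold kf, ksf. auto_derive. lra. field. lra. Qed.

Lemma kf_mono a gLR gRL x y : 0 < gLR -> 0 < gRL -> 0 < y -> y <= x -> kf a gLR gRL x <= kf a gLR gRL y.
Proof. intros. unfold kf. assert (/x <= /y) by (apply Rinv_le_contravar; lra). unfold Rdiv. nra. Qed.

Lemma ds_lemma aL aR muL muR gRL gLR (L Rt : R -> R) t : 0 < Rt t ->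
  is_derive L t (fL aL muL gRL (L t) (Rt t)) -> is_derive Rt t (fR aR muR gLR (L t) (Rt t)) -> 0 < L t ->
  is_derive (fun t => Rt t / L t) t
   (Rt t / L t * ((1 - L t - Rt t) * kf (aR - aL) gLR gRL (Rt t / L t) + (muL - muR))).
Proof. intros hr h1 h2 hl. eapply der_eq. { apply (is_derive_div _ _ _ _ _ h2 h1). lra. }
  unfold fL, fR, Cfree, kf. match goal with |- ?a = ?b => change (@eq R a b) end. field. split; lra. Qed.

Lemma sum_id aL aR muL muR gRL gLR l r : 0 < l -> 0 < r ->
  fL aL muL gRL l r + fR aR muR gLR l r = (l + r) * Psi (aL + gLR) (gRL + aR) muL muR (1 - l - r) (r / l).
Proof. intros. unfold fL, fR, Cfree, Psi. field. split; lra. Qed.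


Lemma phi_der (K1 HS Lf Rf : R -> R) t dK dH dl dr d :
  is_derive K1 t dK -> is_derive HS t dH -> is_derive Lf t dl -> is_derive Rf t dr ->
  0 < Lf t + Rf t ->
  is_derive (fun t => K1 t * (1 - Lf t - Rf t) + (K1 t + d) * ln (Lf t + Rf t) + HS t) t
   (dK * (1 - Lf t - Rf t) + K1 t * (-(dl + dr)) + (dK * ln (Lf t + Rf t) + (K1 t + d) * ((dl + dr)/(Lf t + Rf t))) + dH).
Proof.
intros h1 h2 h3 h4 hn. auto_derive.
- repeat split; try (eexists; eassumption); lra.
- replace (Derive (fun x => K1 x) t) with dK by (symmetry; apply is_derive_unique; exact h1).
  replace (Derive (fun x => HS x) t) with dH by (symmetry; apply is_derive_unique; exact h2).
  replace (Derive (fun x => Lf x) t) with dl by (symmetry; apply is_derive_unique; exact h3).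
  replace (Derive (fun x => Rf x) t) with dr by (symmetry; apply is_derive_unique; exact h4).
  match goal with |- ?a = ?b => change (@eq R a b) end. field. lra.
Qed.

Lemma sign_lemma k x cc d ks A B muL muR : k < - d -> 0 < d -> 0 < x -> 0 < cc < 1 -> ks < 0 ->
  0 < A -> 0 < B ->
  (cc * k + d) * ((x * ks * (cc + ln (1 - cc)) + Psi A B muL muR cc x)
     - (x * ks * (- d / k + ln (1 - - d / k)) + Psi A B muL muR (- d / k) x))
  <= k * ((A + B * x) / (1 + x)) * (cc - - d / k) ^ 2.
Proof.
intros hk hd hx hc hks hA hB.
set (C0 := - d / k).
assert (hC0 : 0 < C0 < 1).
{ unfold C0. split.
  - replace (- d / k) with (d / - k) by (field; lra). apply Rdiv_lt_0_compat; lra.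
  - replace (- d / k) with (d / - k) by (field; lra). apply Rmult_lt_reg_r with (- k). lra.
    replace (d / - k * - k) with d by (field; lra). lra. }
assert (hP : cc * k + d = k * (cc - C0)) by (unfold C0; field; lra).
rewrite hP.
assert (hPsi : Psi A B muL muR cc x - Psi A B muL muR C0 x = (cc - C0) * ((A + B * x) / (1 + x)))
  by (unfold Psi; field; lra).
pose proof (ln_key (1 - cc) (1 - C0) ltac:(lra) ltac:(lra)) as hl.
replace (1 - C0 - (1 - cc)) with (cc - C0) in hl by ring.
set (E := ln (1 - cc) - ln (1 - C0)) in hl.
set (psi := (A + B * x) / (1 + x)).
assert (hpsi : 0 < psi) by (unfold psi; apply Rdiv_lt_0_compat; nra).
replace (k * (cc - C0) *
  (x * ks * (cc + ln (1 - cc)) + Psi A B muL muR cc x -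
   (x * ks * (C0 + ln (1 - C0)) + Psi A B muL muR C0 x)))
 with ((k * x * ks) * ((cc - C0) * ((cc - C0) + E)) + k * (cc - C0) * (Psi A B muL muR cc x - Psi A B muL muR C0 x))
 by (unfold E; ring).
rewrite hPsi.
assert (0 < k * x * ks). { assert (0 < (-k) * x * (-ks)) by (apply Rmult_lt_0_compat; [apply Rmult_lt_0_compat|]; lra). nra. }
assert ((cc - C0) * ((cc - C0) + E) <= 0) by nra.
assert (k * x * ks * ((cc - C0) * ((cc - C0) + E)) <= 0) by nra.
assert (k * (cc - C0) * ((cc - C0) * psi) = k * psi * (cc - C0)^2) by ring.
change ((A + B * x) / (1 + x)) with psi. lra.
Qed.

Lemma fin_lemma l r l0 r0 : 0 < l -> 0 < r -> 0 < l0 -> 0 < r0 -> r / l = r0 / l0 ->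
  1 - l - r = 1 - l0 - r0 -> l = l0 /\ r = r0.
Proof. intros h1 h2 h3 h4 e1 e2.
  assert (r * l0 = r0 * l).
  { apply (f_equal (fun z => z * l * l0)) in e1. field_simplify in e1; lra. }
  assert (l * (l0 + r0) = l0 * (l0 + r0)) by nra.
  assert (l = l0). { apply Rmult_eq_reg_r with (l0 + r0). lra. lra. }
  split; lra.
Qed.

Lemma phi_alg (x k ks lnn lnc0 ps ps0 cc n d : R) : x <> 0 -> k <> 0 -> n <> 0 -> cc = 1 - n ->
  x * (cc * k + d) * ks * cc + k * - (n * ps) + (x * (cc * k + d) * ks * lnn + (k + d) * (n * ps / n))
  + x * (cc * k + d) * (- (x * ks * (- d / k + lnc0) + ps0) / x)
  = (cc * k + d) * (x * ks * (cc + lnn) + ps - (x * ks * (- d / k + lnc0) + ps0)).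
Proof. intros h1 h2 h3 h4. subst cc. field. auto. Qed.

Lemma main_pos aL aR muL muR gRL gLR (haL : 0 < aL) (haR : 0 < aR) (hmuL : 0 < muL) (hmuR : 0 < muR)
  (hgRL : 0 < gRL) (hgLR : 0 < gLR) (L Rt : R -> R) (T : R) (hT : 0 < T)
  (hL : forall t, is_derive L t (fL aL muL gRL (L t) (Rt t)))
  (hR : forall t, is_derive Rt t (fR aR muR gLR (L t) (Rt t)))
  (hper : forall t, L (t + T) = L t /\ Rt (t + T) = Rt t)
  (hint : forall t, in_simplex_interior (L t) (Rt t)) (hd : muR < muL) :
  forall t, L t = L 0 /\ Rt t = Rt 0.
Proof.
set (a := aR - aL). set (A := aL + gLR). set (B := gRL + aR). set (d := muL - muR).
assert (hd' : 0 < d) by (unfold d; lra).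
assert (hpos : forall t, 0 < L t /\ 0 < Rt t /\ L t + Rt t < 1) by (intro t; exact (hint t)).
set (s := fun t => Rt t / L t).
assert (hs_pos : forall t, 0 < s t).
{ intro t; destruct (hpos t) as [h1 [h2 h3]]; unfold s; apply Rdiv_lt_0_compat; auto. }
set (P := fun t => (1 - L t - Rt t) * kf a gLR gRL (s t) + d).
assert (hds : forall t, is_derive s t (s t * P t)).
{ intro t. destruct (hpos t) as [h1 [h2 h3]]. apply ds_lemma; auto. }
assert (hsper : forall t, s (t + T) = s t).
{ intro t; unfold s; destruct (hper t) as [h1 h2]; rewrite h1, h2; reflexivity. }
destruct (per_min s T hT hsper) as [tm htm].
{ intro t; eapply der_cont; apply hds. }
assert (hP0 : P tm = 0).
{ pose proof (min_deriv s tm _ (hds tm) htm) as H.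
  apply Rmult_integral in H. destruct H as [H|H]; auto. pose proof (hs_pos tm); lra. }
set (km := kf a gLR gRL (s tm)).
assert (hkm : km < - d).
{ unfold P in hP0. fold km in hP0. destruct (hpos tm) as [h1 [h2 h3]].
  assert (km < 0) by nra. nra. }
assert (hk : forall t, kf a gLR gRL (s t) <= km).
{ intro t. apply kf_mono; auto. }
set (smin := s tm).
set (gg := fun x => g0 a gLR gRL A B muL muR d (Rmax x smin)).
assert (hgc : forall x, continuous gg x).
{ intro x. unfold gg.
  apply (continuous_comp (fun y => Rmax y smin) (g0 a gLR gRL A B muL muR d)).
  - apply Rmax_cont.
  - pose proof (Rmax_r x smin). assert (0 < smin) by apply hs_pos. apply g0_cont.
    + lra.
    + exact hd'.
    + eapply Rle_lt_trans; [|exact hkm]. apply kf_mono; auto. }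
set (H := fun x => RInt gg smin x).
assert (hH : forall x, is_derive H x (gg x)).
{ intro x. apply (is_derive_RInt gg H smin x).
  - exists (mkposreal 1 Rlt_0_1). intros b _. unfold H. apply (@RInt_correct R_CompleteNormedModule). apply (@ex_RInt_continuous R_CompleteNormedModule).
    intros; apply hgc.
  - apply hgc. }
set (Phi := fun t => kf a gLR gRL (s t) * (1 - L t - Rt t) + (kf a gLR gRL (s t) + d) * ln (L t + Rt t) + H (s t)).
set (dPhi := fun t => P t * ((s t * ksf gLR gRL (s t) * ((1 - L t - Rt t) + ln (1 - (1 - L t - Rt t)))
     + Psi A B muL muR (1 - L t - Rt t) (s t))
   - (s t * ksf gLR gRL (s t) * (- d / kf a gLR gRL (s t) + ln (1 - - d / kf a gLR gRL (s t)))
     + Psi A B muL muR (- d / kf a gLR gRL (s t)) (s t)))).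
assert (hPhi : forall t, is_derive Phi t (dPhi t)).
{ intro t. destruct (hpos t) as [h1 [h2 h3]].
  pose proof (hs_pos t) as hst.
  assert (hkt : kf a gLR gRL (s t) < - d) by (pose proof (hk t); lra).
  eapply der_eq.
  { apply (phi_der (fun t => kf a gLR gRL (s t)) (fun t => H (s t)) L Rt t).
    - apply (is_derive_comp (kf a gLR gRL) s). apply kf_der; auto. apply hds.
    - apply (is_derive_comp H s). apply hH. apply hds.
    - apply hL.
    - apply hR.
    - lra. }
  unfold scal; simpl; unfold mult; simpl.
  unfold gg. rewrite Rmax_left by (apply Rge_le, Rle_ge; apply htm).
  rewrite sum_id by auto. fold A B.
  unfold dPhi, g0, mf, P.
  replace (1 - (1 - L t - Rt t)) with (L t + Rt t) by ring.
  change (Rt t / L t) with (s t).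
  apply phi_alg; try lra. }
set (C0 := fun t => - d / kf a gLR gRL (s t)).
assert (hbound : forall t, dPhi t <= kf a gLR gRL (s t) * ((A + B * s t) / (1 + s t)) * (1 - L t - Rt t - C0 t) ^ 2).
{ intro t. destruct (hpos t) as [h1 [h2 h3]]. pose proof (hs_pos t).
  assert (kf a gLR gRL (s t) < - d) by (pose proof (hk t); lra).
  unfold dPhi, C0, P. apply sign_lemma; try lra.
  - unfold ksf. assert (0 < gLR / (s t * s t)) by (apply Rdiv_lt_0_compat; nra). lra.
  - unfold A; lra.
  - unfold B; lra. }
assert (hcoef : forall t, kf a gLR gRL (s t) * ((A + B * s t) / (1 + s t)) < 0).
{ intro t. pose proof (hs_pos t). assert (0 < (A + B * s t) / (1 + s t)).
  { apply Rdiv_lt_0_compat; unfold A, B; nra. }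
  pose proof (hk t). nra. }
assert (hneg : forall t, dPhi t <= 0).
{ intro t. pose proof (hbound t). pose proof (hcoef t).
  pose proof (pow2_ge_0 (1 - L t - Rt t - C0 t)). nra. }
assert (hphiper : forall t, Phi (t + T) = Phi t).
{ intro t. unfold Phi. rewrite hsper. destruct (hper t) as [e1 e2]. rewrite e1, e2. reflexivity. }
pose proof (periodic_zero Phi dPhi T hT hPhi hneg hphiper) as hz.
assert (hcc : forall t, 1 - L t - Rt t = C0 t).
{ intro t. pose proof (hbound t). pose proof (hcoef t). rewrite hz in H0.
  assert ((1 - L t - Rt t - C0 t) ^ 2 <= 0).
  { apply Rmult_le_reg_l with (- (kf a gLR gRL (s t) * ((A + B * s t) / (1 + s t)))). lra. lra. }
  assert ((1 - L t - Rt t - C0 t) = 0).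
  { apply Rsqr_eq_0. unfold Rsqr. pose proof (pow2_ge_0 (1 - L t - Rt t - C0 t)). simpl in *. nra. }
  lra. }
assert (hsd0 : forall t, is_derive s t 0).
{ intro t. eapply der_eq. apply hds. unfold P. rewrite hcc. unfold C0.
  assert (kf a gLR gRL (s t) < - d) by (pose proof (hk t); lra).
  match goal with |- ?a = ?b => change (@eq R a b) end.
  field. lra. }
pose proof (zero_const s hsd0) as hsc.
intro t. destruct (hpos t) as [h1 [h2 h3]]. destruct (hpos 0) as [h4 [h5 h6]].
apply fin_lemma; auto.
- exact (hsc t).
- rewrite (hcc t), (hcc 0). unfold C0. rewrite (hsc t). reflexivity.
Qed.

Lemma sq0 x : x ^ 2 = 0 -> x = 0.
Proof. intros h. nra. Qed.

Lemma v1_der a gLR gRL x : 0 < x ->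
  is_derive (fun x => - a * ln x + gLR / x + gRL * x) x (- kf a gLR gRL x / x).
Proof. intros hx. auto_derive. lra. unfold kf. field. lra. Qed.

Lemma sq_der (Lf Rf : R -> R) t dl dr Cs : is_derive Lf t dl -> is_derive Rf t dr ->
  is_derive (fun t => (1 - Lf t - Rf t - Cs) ^ 2) t (2 * (1 - Lf t - Rf t - Cs) * (- (dl + dr))).
Proof. intros h1 h2. auto_derive.
- repeat split; eexists; eassumption.
- replace (Derive (fun x => Lf x) t) with dl by (symmetry; apply is_derive_unique; exact h1).
  replace (Derive (fun x => Rf x) t) with dr by (symmetry; apply is_derive_unique; exact h2).
  match goal with |- ?a = ?b => change (@eq R a b) end. ring.
Qed.

Lemma main_zero aL aR muL muR gRL gLR (haL : 0 < aL) (haR : 0 < aR) (hmuL : 0 < muL) (hmuR : 0 < muR)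
  (hgRL : 0 < gRL) (hgLR : 0 < gLR) (L Rt : R -> R) (T : R) (hT : 0 < T)
  (hL : forall t, is_derive L t (fL aL muL gRL (L t) (Rt t)))
  (hR : forall t, is_derive Rt t (fR aR muR gLR (L t) (Rt t)))
  (hper : forall t, L (t + T) = L t /\ Rt (t + T) = Rt t)
  (hint : forall t, in_simplex_interior (L t) (Rt t)) (hd : muR = muL) :
  forall t, L t = L 0 /\ Rt t = Rt 0.
Proof.
set (a := aR - aL). set (A := aL + gLR). set (B := gRL + aR).
assert (hpos : forall t, 0 < L t /\ 0 < Rt t /\ L t + Rt t < 1) by (intro t; exact (hint t)).
set (s := fun t => Rt t / L t).
assert (hs_pos : forall t, 0 < s t).
{ intro t; destruct (hpos t) as [h1 [h2 h3]]; unfold s; apply Rdiv_lt_0_compat; auto. }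
set (P := fun t => (1 - L t - Rt t) * kf a gLR gRL (s t) + (muL - muR)).
assert (hds : forall t, is_derive s t (s t * P t)).
{ intro t. destruct (hpos t) as [h1 [h2 h3]]. apply ds_lemma; auto. }
assert (hsper : forall t, s (t + T) = s t).
{ intro t; unfold s; destruct (hper t) as [h1 h2]; rewrite h1, h2; reflexivity. }
set (V1 := fun t => - a * ln (s t) + gLR / (s t) + gRL * s t).
set (dV1 := fun t => (s t * P t) * (- kf a gLR gRL (s t) / s t)).
assert (hV1 : forall t, is_derive V1 t (dV1 t)).
{ intro t. apply (is_derive_comp (fun x => - a * ln x + gLR / x + gRL * x) s).
  apply v1_der; auto. apply hds. }
assert (hdV1 : forall t, dV1 t = - (1 - L t - Rt t) * (kf a gLR gRL (s t))^2).
{ intro t. unfold dV1, P. rewrite hd. pose proof (hs_pos t).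
  field. lra. }
assert (hneg1 : forall t, dV1 t <= 0).
{ intro t. rewrite hdV1. destruct (hpos t) as [h1 [h2 h3]].
  pose proof (pow2_ge_0 (kf a gLR gRL (s t))). nra. }
assert (hV1per : forall t, V1 (t + T) = V1 t).
{ intro t. unfold V1. rewrite hsper. reflexivity. }
pose proof (periodic_zero V1 dV1 T hT hV1 hneg1 hV1per) as hz1.
assert (hP : forall t, P t = 0).
{ intro t. pose proof (hz1 t) as e. rewrite hdV1 in e. destruct (hpos t) as [h1 [h2 h3]].
  assert (kf a gLR gRL (s t) ^ 2 = 0).
  { apply Rmult_eq_reg_l with (- (1 - L t - Rt t)). lra. lra. }
  assert (kf a gLR gRL (s t) = 0) by (apply sq0; auto).
  unfold P. rewrite H0, hd. ring. }
assert (hsd0 : forall t, is_derive s t 0).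
{ intro t. eapply der_eq. apply hds. rewrite hP. match goal with |- ?a = ?b => change (@eq R a b) end. ring. }
pose proof (zero_const s hsd0) as hsc.
set (s0 := s 0).
set (Cs := (muL + muR * s0) / (A + B * s0)).
set (V2 := fun t => (1 - L t - Rt t - Cs) ^ 2).
set (dV2 := fun t => 2 * (1 - L t - Rt t - Cs) * (- (fL aL muL gRL (L t) (Rt t) + fR aR muR gLR (L t) (Rt t)))).
assert (hV2 : forall t, is_derive V2 t (dV2 t)).
{ intro t. apply sq_der; auto. }
assert (hs0 : 0 < s0) by apply hs_pos.
assert (hdV2 : forall t, dV2 t = - 2 * (L t + Rt t) * ((A + B * s0) / (1 + s0)) * (1 - L t - Rt t - Cs) ^ 2).
{ intro t. unfold dV2. destruct (hpos t) as [h1 [h2 h3]]. rewrite sum_id by auto. fold A B.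
  change (Rt t / L t) with (s t). rewrite (hsc t). fold s0. unfold Psi, Cs.
  field. split; unfold A, B; nra. }
assert (hcoef : 0 < (A + B * s0) / (1 + s0)) by (apply Rdiv_lt_0_compat; unfold A, B; nra).
assert (hneg2 : forall t, dV2 t <= 0).
{ intro t. rewrite hdV2. destruct (hpos t) as [h1 [h2 h3]].
  pose proof (pow2_ge_0 (1 - L t - Rt t - Cs)).
  assert (0 <= 2 * (L t + Rt t) * ((A + B * s0) / (1 + s0)) * (1 - L t - Rt t - Cs) ^ 2).
  { apply Rmult_le_pos; [|auto]. apply Rmult_le_pos; lra. }
  lra. }
assert (hV2per : forall t, V2 (t + T) = V2 t).
{ intro t. unfold V2. destruct (hper t) as [e1 e2]. rewrite e1, e2. reflexivity. }
pose proof (periodic_zero V2 dV2 T hT hV2 hneg2 hV2per) as hz2.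
assert (hcc : forall t, 1 - L t - Rt t = Cs).
{ intro t. pose proof (hz2 t) as e. rewrite hdV2 in e. destruct (hpos t) as [h1 [h2 h3]].
  assert ((1 - L t - Rt t - Cs) ^ 2 = 0).
  { apply Rmult_eq_reg_l with (- 2 * (L t + Rt t) * ((A + B * s0) / (1 + s0))).
    lra. assert (0 < 2 * (L t + Rt t) * ((A + B * s0) / (1 + s0))).
    { apply Rmult_lt_0_compat; lra. } lra. }
  assert (1 - L t - Rt t - Cs = 0) by (apply sq0; auto).
  lra. }
intro t. destruct (hpos t) as [h1 [h2 h3]]. destruct (hpos 0) as [h4 [h5 h6]].
apply fin_lemma; auto.
- exact (hsc t).
- rewrite (hcc t), (hcc 0). reflexivity.
Qed.

Theorem corollary3p10
  (aL aR muL muR gRL gLR : R)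
  (haL : 0 < aL) (haR : 0 < aR) (hmuL : 0 < muL) (hmuR : 0 < muR)
  (hgRL : 0 < gRL) (hgLR : 0 < gLR)
  (L Rt : R -> R) (T : R) (hT : 0 < T)
  (hL : forall t, is_derive L t (fL aL muL gRL (L t) (Rt t)))
  (hR : forall t, is_derive Rt t (fR aR muR gLR (L t) (Rt t)))
  (hper : forall t, L (t + T) = L t /\ Rt (t + T) = Rt t)
  (hint : forall t, in_simplex_interior (L t) (Rt t)) :
  forall t, L t = L 0 /\ Rt t = Rt 0.
Proof.
destruct (Rtotal_order muR muL) as [h|[h|h]].
- exact (main_pos aL aR muL muR gRL gLR haL haR hmuL hmuR hgRL hgLR L Rt T hT hL hR hper hint h).
- exact (main_zero aL aR muL muR gRL gLR haL haR hmuL hmuR hgRL hgLR L Rt T hT hL hR hper hint h).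
- assert (hL' : forall t, is_derive Rt t (fL aR muR gLR (Rt t) (L t))).
  { intro t. eapply der_eq. apply hR. unfold fL, fR, Cfree.
    match goal with |- ?a = ?b => change (@eq R a b) end. ring. }
  assert (hR' : forall t, is_derive L t (fR aL muL gRL (Rt t) (L t))).
  { intro t. eapply der_eq. apply hL. unfold fL, fR, Cfree.
    match goal with |- ?a = ?b => change (@eq R a b) end. ring. }
  assert (hper' : forall t, Rt (t + T) = Rt t /\ L (t + T) = L t).
  { intro t. destruct (hper t); split; auto. }
  assert (hint' : forall t, in_simplex_interior (Rt t) (L t)).
  { intro t. pose proof (hint t) as hh. unfold in_simplex_interior in *. lra. }
  pose proof (main_pos aR aL muR muL gLR gRL haR haL hmuR hmuL hgLR hgRL Rt L T hT hL' hR' hper' hint' h) as HH.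
  intro t. destruct (HH t). split; auto.
Qed.
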